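(* For integers $2\leq k\leq n$, $$D(n,k)=(k-1)\, D(n-1,k) + k\, D(n-1,k-1).$$ In addition, $D(n,n)=n!$, $D(n,1)=0$ for $n>1$, and $D(n,k)=0$ for $k>n$.
   Context: A walk of length $n-1$ in a graph is a sequence of $n$ vertices $v_1,\dots,v_n$ such that $\{v_i,v_{i+1}\}$ is an edge for each $i$. $D(n,k)$ denotes the number of walks of length $n-1$ in the complete graph $K_k$ on $k$ labelled vertices (no self-loops) that visit every vertex of $K_k$ at least once. *)

(* Defs.v *)
From mathcomp Require Import all_boot.
Set Implicit Arguments. Unset Strict Implicit. Unset Printing Implicit Defensive.

(* Vertices of K_k are 'I_k; a walk of length n-1 is a sequence of n vertices
   (an n.-tuple) with consecutive vertices distinct (edges of K_k, no loops). *)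
Definition is_walk (k : nat) (w : seq 'I_k) : bool := sorted (fun x y => x != y) w.

Definition covers (k : nat) (w : seq 'I_k) : bool := [forall v : 'I_k, v \in w].

Definition D (n k : nat) : nat :=
  #|[set w : n.-tuple 'I_k | is_walk w && covers w]|.

(* Main.v *)
Require Import Defs.
From mathcomp Require Import all_boot.
Set Implicit Arguments. Unset Strict Implicit. Unset Printing Implicit Defensive.

Fixpoint tups k n : seq (seq 'I_k) :=
  if n is n'.+1 then [seq x :: t | x <- enum 'I_k, t <- tups k n'] else [:: [::]].

Lemma mem_tups k n s : (s \in tups k n) = (size s == n).
Proof.
elim: n s => [|n IH] [|x s] //=.
- apply/allpairsP => -[[a b] [_ _]] //.
- apply/allpairsP; case: ifP => [H|H].
  + by exists (x, s); rewrite /= mem_enum IH.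
  + by case=> -[a b] /= [_ Hb [_ Hs]]; move: Hb H; rewrite -Hs IH eqSS => ->.
Qed.

Lemma uniq_tups k n : uniq (tups k n).
Proof.
elim: n => [|n IH] //=.
apply: allpairs_uniq => //; first exact: enum_uniq.
by move=> [a b] [c d] _ _ /= [-> ->].
Qed.

Lemma count_sum T (a : pred T) s : count a s = \sum_(t <- s) a t.
Proof. by elim: s => [|x s IH]; rewrite ?big_nil ?big_cons //= IH. Qed.

Definition P k (s : seq 'I_k) := is_walk s && covers s.

Lemma D_count n k : D n k = count (@P k) (tups k n).
Proof.
rewrite /D cardsE cardE /enum_mem size_filter.
have -> : count (mem [pred w : n.-tuple 'I_k | is_walk w && covers w]) (Finite.enum (n.-tuple 'I_k))
   = count (@P k) (map val (Finite.enum (n.-tuple 'I_k))) by rewrite count_map.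
apply/permP/uniq_perm.
- rewrite map_inj_uniq -?enumT; [exact: enum_uniq | exact: val_inj].
- exact: uniq_tups.
move=> s; rewrite mem_tups; apply/mapP; case: eqP => [H|H].
  by exists (Tuple (introT eqP H)) => //; rewrite -enumT mem_enum.
by case=> w _ Hw; apply: H; rewrite Hw size_tuple.
Qed.

Lemma sumn_big T (f : T -> nat) s : sumn (map f s) = \sum_(x <- s) f x.
Proof. by elim: s => [|x s IH]; rewrite ?big_nil ?big_cons //= IH. Qed.

Lemma count_cons k n (a : pred (seq 'I_k)) :
  count a (tups k n.+1) = \sum_(x <- enum 'I_k) count (fun t => a (x :: t)) (tups k n).
Proof.
rewrite /= /allpairs_dep count_flatten -map_comp sumn_big.
by apply: eq_bigr => x _ /=; rewrite count_map.
Qed.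

Definition R k (x : 'I_k) (t : seq 'I_k) :=
  is_walk t && (x \notin t) && [forall v, (v != x) ==> (v \in t)].

Lemma path_lift k (x : 'I_k.+1) a s :
  path (fun u v => u != v) (lift x a) (map (lift x) s) = path (fun u v => u != v) a s.
Proof. by elim: s a => [|b s IH] a //=; rewrite IH (inj_eq lift_inj). Qed.

Lemma walk_lift k (x : 'I_k.+1) s : is_walk (map (lift x) s) = is_walk s.
Proof. by case: s => [|a s] //=; rewrite /is_walk /= path_lift. Qed.

Lemma map_pmap_lift k (x : 'I_k.+1) s : x \notin s -> map (lift x) (pmap (unlift x) s) = s.
Proof.
elim: s => [|a s IH] //=; rewrite in_cons negb_or => /andP [xa xs].
by case: (unlift_some xa) => j -> ->; rewrite /= IH.
Qed.

Lemma relabel k m (x : 'I_k.+1) : count (R x) (tups k.+1 m) = count (@P k) (tups k m).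
Proof.
have -> : count (R x) (tups k.+1 m) = count (R x) [seq s <- tups k.+1 m | x \notin s].
  by rewrite count_filter; apply: eq_count => s /=; rewrite /R; case: (x \in s); rewrite ?andbF ?andbT.
have -> : count (R x) [seq s <- tups k.+1 m | x \notin s] = count (R x) (map (map (lift x)) (tups k m)).
  apply/permP/uniq_perm.
  - by rewrite filter_uniq // uniq_tups.
  - by rewrite map_inj_uniq ?uniq_tups //; apply: inj_map; apply: lift_inj.
  move=> s; rewrite mem_filter mem_tups; apply/idP/mapP.
    case/andP => xs sz; exists (pmap (unlift x) s); last by rewrite map_pmap_lift.
    by rewrite mem_tups -(size_map (lift x)) map_pmap_lift.
  case=> t; rewrite mem_tups => sz ->; rewrite size_map sz andbT.
  apply/mapP => -[y _ Hy]; move: (neq_lift x y); by rewrite -Hy eqxx.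
rewrite (count_map (map (lift x)) (R x) (tups k m)); apply: eq_count => s /=.
rewrite /R /P walk_lift; congr (_ && _).
have -> : x \notin map (lift x) s.
  by apply/mapP => -[y _ Hy]; move: (neq_lift x y); rewrite -Hy eqxx.
  by rewrite andbT.
rewrite /covers; apply/forallP/forallP => H v.
  by move: (H (lift x v)); rewrite eq_sym neq_lift /= (mem_map lift_inj).
apply/implyP => xv; have xv' : x != v by rewrite eq_sym.
case: (unlift_some xv') => j -> _.
by rewrite (mem_map lift_inj).
Qed.

Lemma point k n (t : seq 'I_k.+1) : size t = n.+1 ->
  \sum_(x <- enum 'I_k.+1) (P (x :: t) : nat) = k * P t + \sum_(x <- enum 'I_k.+1) (R x t : nat).
Proof.
case: t => [|y t] // _.
rewrite /P /R /is_walk /=.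
have cov : forall x, covers (x :: y :: t) = [forall v, (v != x) ==> (v \in y :: t)].
  move=> x; apply/forallP/forallP => H v; move: (H v).
    by rewrite (in_cons x (y :: t)); case: eqVneq.
  by rewrite (in_cons x (y :: t)); case: eqVneq.
case Hc: (covers (y :: t)); case Hw: (path _ y t) => /=.
- have cv : forall x, covers (x :: y :: t).
    by move=> x; apply/forallP => v; rewrite in_cons (forallP Hc v) orbT.
  rewrite muln1 [X in _ = _ + X]big1 ?addn0; last by move=> x _; rewrite (forallP Hc x).
  under eq_bigr => x _ do rewrite cv andbT.
  rewrite big_enum /= -big_mkcond /= sum1_card.
  have E : #|predC1 y| = k by rewrite cardC1 card_ord.
  by rewrite -[RHS]E; apply: eq_card => i; rewrite unfold_in /= andbT.
- by rewrite muln0 add0n; apply: eq_bigr => x _; rewrite andbF.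
- rewrite muln0 add0n; apply: eq_bigr => x _; rewrite cov.
  case: (boolP (x \in y :: t)) => xin /=.
  + suff -> : [forall v, (v != x) ==> (v \in y :: t)] = false by rewrite andbF.
    apply/negbTE/negP => /forallP H; move: Hc; rewrite /covers.
    move/negbT/negP; apply; apply/forallP => v.
    by case: (eqVneq v x) => [-> //| vx]; move: (H v); rewrite vx.
  + by move: xin; rewrite in_cons negb_or => /andP [-> _].
- by rewrite muln0 add0n; apply: eq_bigr => x _; rewrite andbF.
Qed.

Lemma rec n k : D n.+2 k.+1 = k * D n.+1 k.+1 + k.+1 * D n.+1 k.
Proof.
rewrite !D_count count_cons.
under eq_bigr => x _ do rewrite count_sum.
rewrite exchange_big.
rewrite (eq_big_seq (fun t => k * P t + \sum_(x <- enum 'I_k.+1) (R x t : nat))); last first.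
  move=> t Ht; apply: (@point k n); apply/eqP; rewrite -mem_tups; exact: Ht.
rewrite big_split -big_distrr -count_sum exchange_big.
under eq_bigr => x _ do rewrite -count_sum relabel.
by rewrite big_enum sum_nat_const card_ord.
Qed.

Lemma D0 m : D m.+1 0 = 0.
Proof. by rewrite D_count count_cons big_enum big1 // => -[]. Qed.

Lemma Dbig n k : n < k -> D n k = 0.
Proof.
move=> nk; rewrite D_count; apply/eqP; rewrite -leqn0 leqNgt -has_count.
apply/hasPn => s; rewrite mem_tups => /eqP sz; apply/negP => /andP [_ cov].
have : #|'I_k| <= #|s|.
  apply: subset_leq_card; apply/subsetP => v _; exact: (forallP cov v).
rewrite card_ord => H; move: (leq_trans H (card_size s)); rewrite sz leqNgt nk.
done.
Qed.

Lemma D11 : D 1 1 = 1.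
Proof.
rewrite D_count /= enum_ordSl enum_ord0 /= /P /is_walk /=.
have -> : covers [:: ord0 : 'I_1] by apply/forallP => v; rewrite inE ord1.
by [].
Qed.

Theorem mainTheorem3 :
  (forall n k : nat, 2 <= k -> k <= n ->
      D n k = (k - 1) * D n.-1 k + k * D n.-1 k.-1)
  /\ (forall n : nat, 1 <= n -> D n n = n`!)
  /\ (forall n : nat, 1 < n -> D n 1 = 0)
  /\ (forall n k : nat, 1 <= n -> n < k -> D n k = 0).
Proof.
split; [|split; [|split]].
- move=> [|[|n]] [|k] // k2 kn.
    by move: (leq_trans k2 kn).
  by rewrite rec /= subn1.
- elim=> [|[|n] IH] // _.
    by rewrite D11.
  by rewrite rec Dbig // muln0 add0n IH // factS.
- by move=> [|[|n]] // _; rewrite rec D0 muln0.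
- by move=> n k _; apply: Dbig.
Qed.
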